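(* Let $\mathbf{A}(i)$ for all $i=1,\ldots,k$ be conforming block triangular matrices over an idempotent semifield (e.g. max-plus algebra) given by \[ \mathbf{A}(i)=\mathbf{D}(i)\oplus\mathbf{T}(i),\quad \mathbf{D}(i)=\begin{pmatrix}\mathbf{D}_{1}(i) & \mathbf{0}\\ \mathbf{0} & \mathbf{D}_{2}(i)\end{pmatrix},\quad \mathbf{T}(i)=\begin{pmatrix}\mathbf{0} & \mathbf{T}_{12}(i)\\ \mathbf{0} & \mathbf{0}\end{pmatrix}. \] Let $\mathbf{A}_{k}=\mathbf{A}(1)\cdots\mathbf{A}(k)$, $\mathbf{D}_{j}(l,m)=\bigotimes_{i=l}^{m}\mathbf{D}_{j}(i)$ and $\mathbf{D}_{jk}=\mathbf{D}_{j}(1,k)$ for $j=1,2$, with empty products equal to the identity matrix $\mathbf{I}$. Then the following double-inequality holds: \[ \|\mathbf{D}_{1k}\|\oplus\|\mathbf{D}_{2k}\| \leq \|\mathbf{A}_{k}\| \leq \|\mathbf{D}_{1k}\|\oplus\|\mathbf{D}_{2k}\| \oplus \bigoplus_{j=1}^{k}\|\mathbf{T}(j)\| \bigoplus_{i=1}^{k}\|\mathbf{D}_{1}(1,i-1)\|\,\|\mathbf{D}_{2}(i+1,k)\|. \]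
   Context: Work in an idempotent semifield $(\mathbb{X},\oplus,\otimes,\mathbb{0},\mathbb{1})$ (e.g. max-plus algebra with $\oplus=\max$, $\otimes=+$, $\mathbb{0}=-\infty$, $\mathbb{1}=0$), totally ordered by $x\leq y\iff x\oplus y=y$; matrix operations are defined componentwise as usual with $\oplus$ and $\otimes$ (multiplication sign omitted). $\mathbf{0}$ denotes a zero matrix (all entries $\mathbb{0}$), $\mathbf{I}$ the identity matrix. The tropical norm of a matrix is $\|\mathbf{A}\|=\bigoplus_{i,j}a_{ij}$ (the maximum entry in max-plus algebra), satisfying $\|\mathbf{A}\oplus\mathbf{B}\|=\|\mathbf{A}\|\oplus\|\mathbf{B}\|$, $\|\mathbf{A}\mathbf{C}\|\leq\|\mathbf{A}\|\|\mathbf{C}\|$, $\|x\mathbf{A}\|=x\|\mathbf{A}\|$. *)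

(* Defs.v *)
From HB Require Import structures.
From mathcomp Require Import all_boot all_order all_algebra.
Set Implicit Arguments. Unset Strict Implicit. Unset Printing Implicit Defensive.
Import GRing.Theory.
Local Open Scope ring_scope.

(* An idempotent semifield, presented on a MathComp commutative non-trivial
   semiring R: "+" plays the role of (+) (tropical addition), "*" of (x),
   0 of the tropical zero and 1 of the tropical one. *)
Definition idempotent_semifield (R : comNzSemiRingType) : Prop :=
  (forall x : R, x + x = x) /\
  (forall x : R, x != 0 -> exists y : R, x * y = 1).

Definition tle {R : comNzSemiRingType} (x y : R) : Prop := x + y = y.

Definition tle_total (R : comNzSemiRingType) : Prop :=
  forall x y : R, tle x y \/ tle y x.

Definition tnorm {R : comNzSemiRingType} {m n : nat} (A : 'M[R]_(m, n)) : R :=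
  \sum_(i < m) \sum_(j < n) A i j.

Definition mxprod {R : comNzSemiRingType} {n : nat} (D : nat -> 'M[R]_n)
  (l m : nat) : 'M[R]_n :=
  \big[mulmx/1%:M]_(l <= i < m.+1) D i.

(* Main.v *)
Require Import Defs.
From HB Require Import structures.
From mathcomp Require Import all_boot all_order all_algebra.
Import GRing.Theory.
Local Open Scope ring_scope.

Section S.
Context {R : comNzSemiRingType}.
Hypothesis idem : forall x : R, x + x = x.

Lemma tle_refl (x : R) : tle x x. Proof. exact: idem. Qed.
Lemma tle_trans (x y z : R) : tle x y -> tle y z -> tle x z.
Proof. rewrite /tle => h1 h2; by rewrite -h2 addrA h1. Qed.
Lemma tle_addl (x y : R) : tle x (x + y).
Proof. by rewrite /tle addrA idem. Qed.
Lemma tle_addr (x y : R) : tle y (x + y).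
Proof. by rewrite addrC; apply: tle_addl. Qed.
Lemma tle0 (x : R) : tle 0 x. Proof. by rewrite /tle add0r. Qed.
Lemma tle_add (x y x' y' : R) : tle x y -> tle x' y' -> tle (x + x') (y + y').
Proof. rewrite /tle => h1 h2. by rewrite addrACA h1 h2. Qed.
Lemma tle_lub (x x' y : R) : tle x y -> tle x' y -> tle (x + x') y.
Proof. move=> h1 h2; rewrite -(idem y); exact: tle_add. Qed.
Lemma tle_mull (x y z : R) : tle x y -> tle (x * z) (y * z).
Proof. by rewrite /tle => h; rewrite -mulrDl h. Qed.
Lemma tle_mul (x y x' y' : R) : tle x y -> tle x' y' -> tle (x * x') (y * y').
Proof.
move=> h1 h2; apply: (tle_trans _ _ _ (tle_mull _ _ x' h1)).
by rewrite ![y * _]mulrC; apply: tle_mull.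
Qed.
Lemma tle_sum_bound (I : Type) (r : seq I) (P : pred I) (F : I -> R) M :
  (forall i, P i -> tle (F i) M) -> tle (\sum_(i <- r | P i) F i) M.
Proof.
move=> h; apply: (big_ind (fun x => tle x M)); [exact: tle0|move=> a b; exact: tle_lub|exact: h].
Qed.
Lemma tle_sum (I : Type) (r : seq I) (P : pred I) (F G : I -> R) :
  (forall i, P i -> tle (F i) (G i)) ->
  tle (\sum_(i <- r | P i) F i) (\sum_(i <- r | P i) G i).
Proof.
move=> h; apply: (big_ind2 (fun x y => tle x y)); [exact: tle_refl|move=> a b c d; exact: tle_add|exact: h].
Qed.
Lemma tle_term (I : finType) (F : I -> R) i : tle (F i) (\sum_j F j).
Proof. rewrite (bigD1 i) //=; exact: tle_addl. Qed.
Lemma tle_term_seq (I : eqType) (r : seq I) (F : I -> R) i :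
  i \in r -> tle (F i) (\sum_(j <- r) F j).
Proof.
elim: r => // a r IH; rewrite inE big_cons => /orP [/eqP->|/IH h].
  exact: tle_addl.
apply: (tle_trans _ _ _ h); exact: tle_addr.
Qed.
Lemma tle_entry m n (A : 'M[R]_(m, n)) i j : tle (A i j) (tnorm A).
Proof.
have h1 := tle_term _ (fun j => A i j) j.
have h2 := tle_term _ (fun i => \sum_j A i j) i.
exact: (tle_trans _ _ _ h1 h2).
Qed.
Lemma tnorm_mul m n p (A : 'M[R]_(m, n)) (B : 'M[R]_(n, p)) :
  tle (tnorm (A *m B)) (tnorm A * tnorm B).
Proof.
apply: tle_sum_bound => i _; apply: tle_sum_bound => j _.
rewrite mxE; apply: tle_sum_bound => c _.
apply: tle_mul; exact: tle_entry.
Qed.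
Lemma tnormD m n (A B : 'M[R]_(m, n)) : tnorm (A + B) = tnorm A + tnorm B.
Proof.
rewrite /tnorm -big_split /=; apply: eq_bigr => i _.
rewrite -big_split /=; apply: eq_bigr => j _; by rewrite mxE.
Qed.
Lemma tnorm0 m n : tnorm (0 : 'M[R]_(m, n)) = 0.
Proof. rewrite /tnorm big1 // => i _; rewrite big1 // => j _; by rewrite mxE. Qed.
Lemma tnorm_sum m n (I : Type) (r : seq I) (P : pred I) (F : I -> 'M[R]_(m, n)) :
  tnorm (\sum_(i <- r | P i) F i) = \sum_(i <- r | P i) tnorm (F i).
Proof. apply: (big_morph _ (@tnormD m n) (@tnorm0 m n)). Qed.
Lemma tnorm_block m1 m2 n1 n2 (a : 'M[R]_(m1, n1)) (b : 'M[R]_(m1, n2))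
  (c : 'M[R]_(m2, n1)) (d : 'M[R]_(m2, n2)) :
  tnorm (block_mx a b c d) = tnorm a + tnorm b + (tnorm c + tnorm d).
Proof.
rewrite /tnorm big_split_ord /=.
congr (_ + _); rewrite -big_split /=; apply: eq_bigr => i _;
  rewrite big_split_ord /=; congr (_ + _); apply: eq_bigr => j _;
  by rewrite ?block_mxEul ?block_mxEur ?block_mxEdl ?block_mxEdr.
Qed.

Lemma big_mulmx_rcons n (I : Type) (r : seq I) x (F : I -> 'M[R]_n) :
  \big[mulmx/1%:M]_(i <- rcons r x) F i = \big[mulmx/1%:M]_(i <- r) F i *m F x.
Proof.
elim: r => [|a r IH] /=; first by rewrite big_cons !big_nil mulmx1 mul1mx.
by rewrite !big_cons IH mulmxA.
Qed.
Lemma mxprodS n (f : nat -> 'M[R]_n) l m : (l <= m.+1)%N ->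
  mxprod f l m.+1 = mxprod f l m *m f m.+1.
Proof.
move=> h; rewrite /mxprod -big_mulmx_rcons; congr (bigop _ _ _).
rewrite /index_iota subSn // -addn1 iotaD /= cats1 subnKC //.
Qed.
End S.

Theorem proposition1 (R : comNzSemiRingType)
  (hR : idempotent_semifield R) (htot : tle_total R)
  (n1 n2 k : nat)
  (D1 : nat -> 'M[R]_n1) (D2 : nat -> 'M[R]_n2)
  (T12 : nat -> 'M[R]_(n1, n2)) :
  let D := fun i => block_mx (D1 i) 0 0 (D2 i) in
  let T := fun i => block_mx 0 (T12 i) 0 0 in
  let A := fun i => D i + T i in
  let Ak := mxprod A 1 k in
  let D1k := mxprod D1 1 k in
  let D2k := mxprod D2 1 k in
  tle (tnorm D1k + tnorm D2k) (tnorm Ak) /\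
  tle (tnorm Ak)
      (tnorm D1k + tnorm D2k +
       (\sum_(1 <= j < k.+1) tnorm (T j)) *
       (\sum_(1 <= i < k.+1) tnorm (mxprod D1 1 i.-1) * tnorm (mxprod D2 i.+1 k))).
Proof.
move=> D T A Ak D1k D2k.
have idem := proj1 hR.
pose U m := \sum_(1 <= i < m.+1)
   mxprod D1 1 i.-1 *m T12 i *m mxprod D2 i.+1 m.
have Ablk : forall i, A i = block_mx (D1 i) (T12 i) 0 (D2 i).
  move=> i; rewrite /A /D /T add_block_mx.
  by rewrite !(addr0, add0r).
have key : forall m, mxprod A 1 m = block_mx (mxprod D1 1 m) (U m) 0 (mxprod D2 1 m).
  elim=> [|m IH].
    rewrite /U /mxprod !big_geq //.
    exact: scalar_mx_block.
  rewrite mxprodS // IH Ablk mulmx_block !mxprodS //.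
  rewrite !mulmx0 !mul0mx !addr0 !add0r; congr block_mx.
  rewrite /U (big_nat_recr m.+1) //= addrC.
  have E : mxprod D2 m.+2 m.+1 = 1%:M by rewrite /mxprod big_geq.
  rewrite E mulmx1; congr (_ + _).
  rewrite mulmx_suml; apply: eq_big_nat => i /andP [h1 h2].
  by rewrite mxprodS // mulmxA.
have nAk : tnorm Ak = tnorm D1k + tnorm (U k) + tnorm D2k.
  by rewrite /Ak key tnorm_block tnorm0 add0r.
rewrite nAk; split.
  apply: (tle_lub idem) => //.
    apply: (tle_trans _ _ _ (tle_addl idem _ (tnorm (U k)))).
    exact: (tle_addl idem).
  exact: (tle_addr idem).
set X := (_ * _).
have hU : tle (tnorm (U k)) X.
  rewrite /U tnorm_sum /X mulr_sumr.
  rewrite big_seq [X in tle _ X]big_seq.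
  apply: (tle_sum idem) => i hi.
  set P := mxprod D1 1 i.-1; set Q := mxprod D2 i.+1 k.
  have h1 := tnorm_mul idem _ _ _ (P *m T12 i) Q.
  have h2 := tle_mull _ _ (tnorm Q) (tnorm_mul idem _ _ _ P (T12 i)).
  apply: (tle_trans _ _ _ h1); apply: (tle_trans _ _ _ h2).
  rewrite [tnorm P * _]mulrC -mulrA.
  have hh : tle (tnorm (T12 i)) (\sum_(1 <= j < k.+1) tnorm (T j)).
    have -> : tnorm (T12 i) = tnorm (T i).
      by rewrite /T tnorm_block !tnorm0 add0r !addr0.
    exact: (tle_term_seq idem _ _ (fun j => tnorm (T j)) _ hi).
  exact: (tle_mul _ _ _ _ hh (tle_refl idem _)).
apply: (tle_lub idem).
  apply: (tle_lub idem).
    apply: (tle_trans _ _ _ (tle_addl idem _ (tnorm D2k))).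
    exact: (tle_addl idem).
  apply: (tle_trans _ _ _ hU); exact: (tle_addr idem).
apply: (tle_trans _ _ _ (tle_addr idem (tnorm D1k) (tnorm D2k))).
exact: (tle_addl idem).
Qed.
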